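(* Let $q$ be a prime power, $m\ge2$, $1\le k<n$, and let $X\in \mathbb{F}_{q^m}^{k\times (n-k)}$ be chosen uniformly at random. Then $$\Pr\big(\mathrm{rs}[\,I_k\mid X\,] \text{ is a generalized Gabidulin code}\big)\leq \phi(m)\,q^{-(m-1)(n-k-1)(k-1)},$$ where $\phi$ is Euler's totient function.
   Context: $\mathrm{rs}$ denotes $\mathbb{F}_{q^m}$-row space. For $s$ coprime to $m$ and $g_1,\dots,g_n\in\mathbb{F}_{q^m}$ linearly independent over $\mathbb{F}_q$, the generalized Gabidulin code of dimension $k$ with parameter $s$ is the row space of the $k\times n$ matrix with $(i,j)$ entry $g_j^{q^{s(i-1)}}$; a generalized Gabidulin code is such a code for some such $s$ and $g_1,\dots,g_n$. *)

(* Defs.v *)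
From HB Require Import structures.
From mathcomp Require Import all_boot all_order all_algebra all_field.
Set Implicit Arguments. Unset Strict Implicit. Unset Printing Implicit Defensive.
Import Order.TTheory GRing.Theory Num.Theory.
Local Open Scope ring_scope.

Definition prime_power (q : nat) : Prop :=
  exists p e : nat, prime p /\ (0 < e)%N /\ q = (p ^ e)%N.

(* Elements of the subfield F_q of F = F_{q^m}: the fixed points of x |-> x^q. *)
Definition in_Fq (F : finFieldType) (q : nat) (x : F) : bool := x ^+ q == x.

Definition Fq_lin_indep (F : finFieldType) (q n : nat) (g : 'I_n -> F) : Prop :=
  forall c : 'I_n -> F, (forall j, in_Fq q (c j)) ->
    \sum_(j < n) c j * g j = 0 -> forall j, c j = 0.

(* generator matrix of the generalized Gabidulin code: (i,j) entry g_j^{q^{s i}}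
   (0-based i, i.e. q^{s(i-1)} with 1-based i) *)
Definition gab_mx (F : finFieldType) (q s k n : nat) (g : 'I_n -> F) : 'M[F]_(k, n) :=
  \matrix_(i < k, j < n) g j ^+ (q ^ (s * i)).

Definition is_gen_gabidulin (F : finFieldType) (q m k n : nat) (M : 'M[F]_(k, n)) : Prop :=
  exists (s : nat) (g : 'I_n -> F),
    coprime s m /\ Fq_lin_indep q g /\ (M == gab_mx q s k g)%MS.

(* Main.v *)
Require Import Defs.
From HB Require Import structures.
From mathcomp Require Import all_boot all_order all_algebra all_field.
From mathcomp Require Import zify.
Import Order.TTheory GRing.Theory Num.Theory.
Local Open Scope ring_scope.

Lemma cardB (F : finType) (I : finType) (i0 : I) (a : F) :
  #|[set f : {ffun I -> F} | f i0 == a]| = (#|F| ^ #|I|.-1)%N.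
Proof.
pose Fp := fun i : I => if i == i0 then pred1 a else predT.
have -> : #|[set f : {ffun I -> F} | f i0 == a]| = #|family Fp|.
  apply: eq_card => f; rewrite inE; apply/eqP/familyP.
    by move=> fa i; rewrite /Fp; case: eqP => // ->; rewrite inE fa.
  by move=> /(_ i0); rewrite /Fp eqxx inE => /eqP.
rewrite card_family foldrE big_map big_enum /= (bigD1 i0) //= /Fp eqxx card1 mul1n.
rewrite (eq_bigr (fun _ => #|F|)); last by move=> i /negbTE ->; rewrite cardT.
by rewrite prod_nat_const cardC1.
Qed.
Lemma cardCop m : #|[set a : 'I_m | coprime a m]| = totient m.
Proof.
rewrite totient_count_coprime big_mkord -sum1_card.
rewrite (big_mkcond (fun i => i \in _)) /=; apply: eq_bigr => i _.
by rewrite inE coprime_sym; case: coprime.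
Qed.
Lemma sys_inj (F : fieldType) k r (X Y : 'M[F]_(k, r)) :
  (row_mx 1%:M X == row_mx 1%:M Y)%MS -> X = Y.
Proof.
case/andP=> /submxP [D] + _.
rewrite mul_mx_row mulmx1 => /eq_row_mx [E1 ->].
by rewrite -E1 mul1mx.
Qed.

Lemma expq (F : finFieldType) q m (x : F) c t :
  #|F| = (q ^ m)%N -> x ^+ (q ^ (c + m * t)) = x ^+ (q ^ c).
Proof.
move=> hF; elim: t => [|t IH]; first by rewrite muln0 addn0.
by rewrite mulnS addnCA expnD mulnC exprM -hF expf_card.
Qed.

Lemma expq_mod (F : finFieldType) q m (x : F) s i :
  #|F| = (q ^ m)%N -> x ^+ (q ^ (s * i)) = x ^+ (q ^ ((s %% m)%N * i)).
Proof.
move=> hF; rewrite {1}(divn_eq s m) mulnDl addnC.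
have -> : (s %/ m * m * i = m * (s %/ m * i))%N by rewrite mulnAC mulnC.
exact: expq.
Qed.

Lemma gab_norm (F : finFieldType) q m s k n (g : 'I_n -> F) (i0 : 'I_n) :
  #|F| = (q ^ m)%N -> g i0 != 0 ->
  (gab_mx q (s %% m)%N k (fun j => g j / g i0) :=: gab_mx q s k g)%MS.
Proof.
move=> hF g0.
pose d := \row_(i < k) ((g i0)^-1 ^+ (q ^ (s * i))).
have -> : gab_mx q (s %% m)%N k (fun j => g j / g i0) = diag_mx d *m gab_mx q s k g.
  apply/matrixP => i j; rewrite mul_diag_mx !mxE -(expq_mod _ _ _ _ _ _ hF).
  by rewrite exprMn mulrC.
apply: eqmxMfull; rewrite row_full_unit unitmxE det_diag unitfE.
by apply/prodf_neq0 => i _; rewrite mxE expf_neq0 // invr_eq0.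
Qed.
Lemma arith (N phi q m k r : nat) : (1 < q)%N -> (1 <= k)%N -> (1 <= r)%N -> (1<=m)%N ->
  (N <= phi * (q ^ m) ^ (k + r).-1)%N ->
  (N%:R / ((q ^ m) ^ (k * r))%:R : rat)
      <= (phi)%:R * (q%:R) ^- ((m - 1) * (r - 1) * (k - 1)).
Proof.
move=> q1 k1 r1 m1 HN.
set e := ((m - 1) * (r - 1) * (k - 1))%N.
have qp : (0 : rat) < q%:R by rewrite ltr0n; lia.
rewrite ler_pdivrMr; last by rewrite ltr0n expn_gt0; apply/orP; left; rewrite expn_gt0; lia.
have hD : (m * (k * r) = e + m * (k + r).-1 + (r - 1) * (k - 1))%N.
  rewrite /e; clear e; case: k k1 {HN} => // k _; case: r r1 => // r _; case: m m1 => // m _.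
  rewrite !subn1 /= addnS /=; nia.
rewrite -expnM hD !natrX !exprD -!mulrA mulKf ?expf_neq0 ?gt_eqF //.
apply: (le_trans (y := (phi * q ^ (m * (k + r).-1))%:R)).
  by rewrite ler_nat expnM.
rewrite natrM natrX mulrA.
apply: ler_peMr; first by rewrite mulr_ge0 ?exprn_ge0 ?ler0n ?ltW.
by rewrite exprn_ege1 // ler1n; lia.
Qed.

Lemma g0_neq0 (F : finFieldType) q n (g : 'I_n -> F) (i0 : 'I_n) :
  (0 < q)%N -> Fq_lin_indep q g -> g i0 != 0.
Proof.
move=> q0 ind; apply/negP => /eqP g0.
have h1 : forall j, in_Fq q ((j == i0)%:R : F).
  by move=> j; rewrite /in_Fq; case: (j == i0); rewrite ?mulr1n ?mulr0n ?expr1n ?expr0n ?(gtn_eqF q0) ?eqxx.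
have h2 : \sum_(j < n) (j == i0)%:R * g j = 0 :> F.
  rewrite (bigD1 i0) //= g0 mulr0 add0r big1 // => j /negbTE ->; by rewrite mul0r.
have := ind _ h1 h2 i0; rewrite eqxx => /eqP; by rewrite oner_eq0.
Qed.

Theorem theorem4p11 (F : finFieldType) (q m k r : nat) :
  prime_power q -> #|F| = (q ^ m)%N -> (2 <= m)%N -> (1 <= k)%N -> (1 <= r)%N ->
  forall S : {set 'M[F]_(k, r)},
    (forall X : 'M[F]_(k, r),
        X \in S <-> is_gen_gabidulin q m (row_mx (1%:M : 'M[F]_k) X)) ->
    (#|S|%:R / #|{: 'M[F]_(k, r)}|%:R : rat)
      <= (totient m)%:R * (q%:R) ^- ((m - 1) * (r - 1) * (k - 1)).
Proof.
move=> [pr [e [pp [e0 qE]]]] hF m2 k1 r1 S HS.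
have q1 : (1 < q)%N by rewrite qE -(exp1n e) ltn_exp2r // prime_gt1.
have m0 : (0 < m)%N by apply: leq_trans m2.
have n0 : (0 < k + r)%N by rewrite addn_gt0 k1.
pose i0 : 'I_(k + r) := Ordinal n0.
pose T := setX [set a : 'I_m | coprime a m] [set f : {ffun 'I_(k + r) -> F} | f i0 == 1].
pose f X := [pick p in T | (row_mx (1%:M : 'M[F]_k) X == gab_mx q p.1 k p.2)%MS].
have hex : forall X, X \in S -> exists2 p, p \in T &
    (row_mx (1%:M : 'M[F]_k) X == gab_mx q p.1 k p.2)%MS.
  move=> X /HS [s [g [cop [ind eqM]]]].
  have g0 := @g0_neq0 _ _ _ g i0 (ltnW q1) ind.
  exists (Ordinal (ltn_pmod s m0), [ffun j => g j / g i0]).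
    by rewrite !inE /= coprime_modl cop ffunE divff ?eqxx.
  have -> : gab_mx q (Ordinal (ltn_pmod s m0), [ffun j => g j / g i0]).1 k
      (Ordinal (ltn_pmod s m0), [ffun j => g j / g i0]).2
      = gab_mx q (s %% m)%N k (fun j => g j / g i0).
    by apply/matrixP => i j; rewrite !mxE ffunE.
  move/eqmxP: eqM => eqM; apply/eqmxP; exact: eqmx_trans eqM (eqmx_sym (gab_norm F q m s k (k + r) g i0 hF g0)).
have hf : forall X, X \in S -> exists2 p, f X = Some p &
    (row_mx (1%:M : 'M[F]_k) X == gab_mx q p.1 k p.2)%MS.
  move=> X XS; rewrite /f; case: pickP => [p /andP [_ H] | none].
    by exists p.
  by case: (hex X XS) => p pT H; move: (none p); rewrite pT H.
have cardS : (#|S| <= #|T|)%N.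
  have inj : {in S &, injective f}.
    move=> X Y XS YS fXY; case: (hf X XS) => p fX HX; case: (hf Y YS) => p' fY HY.
    move: fXY; rewrite fX fY => -[Ep]; subst p'.
    move/eqmxP: HX => HX; move/eqmxP: HY => HY.
    apply: sys_inj; apply/eqmxP; exact: eqmx_trans HX (eqmx_sym HY).
  rewrite -(card_in_imset inj) -(card_imset T (@Some_inj _)).
  apply: subset_leq_card; apply/subsetP => o /imsetP [X XS ->].
  case: (hf X XS) => p fX _; rewrite fX; apply: imset_f.
  move: fX; rewrite /f; case: pickP => // p' /andP [pT _] [<-] //.
rewrite card_mx hF.
apply: arith => //.
by move: cardS; rewrite cardsX cardCop cardB card_ord hF.
Qed.
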